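(* Let $K$ be a parallelogram and $k\ge1$ an integer. Let $V(K)=\mathcal P_k(K)$, $\bm W(K)=[\mathcal P_k(K)]^2$, and $\bm M(\partial K)=\{\bm\mu:\bm\mu|_F=\bm n\times p_k\text{ for some }p_k\in\mathcal P_k(F),\text{ for each edge }F\subset\partial K\}$. Then $I_M(V(K)\times\bm W(K))=2$.
   Context: $\mathcal P_k$ denotes polynomials of total degree at most $k$. Conventions in 2D: $\nabla\times\bm v=-\partial_yv_1+\partial_xv_2$, $\nabla\times p=(\partial_yp,-\partial_xp)^T$, $\bm n\times\bm v=-n_2v_1+n_1v_2$, $\bm n\times p=(n_2p,-n_1p)^T$, $\bm n\times\bm w\times\bm n:=\bm w-(\bm w\cdot\bm n)\bm n$, $\bm n$ the unit outward normal. $I_M(V(K)\times\bm W(K)):=\dim\bm M(\partial K)-\dim\{\bm n\times v|_{\partial K}:v\in V(K),\nabla\times v=\bm0\}-\dim\{\bm n\times\bm w\times\bm n|_{\partial K}:\bm w\in\bm W(K),\nabla\times\bm w=0\}$. *)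

(* Defs.v *)
From HB Require Import structures.
From mathcomp Require Import all_boot all_order all_algebra.
From mathcomp Require Import mpoly.

Set Implicit Arguments.
Unset Strict Implicit.
Unset Printing Implicit Defensive.

Import Order.TTheory GRing.Theory Num.Theory.
Local Open Scope ring_scope.

Section Defs.
Variable R : rcfType.

Definition pt := (R * R)%type.

Definition dotp (u v : pt) : R := u.1 * v.1 + u.2 * v.2.
Definition det2 (u v : pt) : R := u.1 * v.2 - u.2 * v.1.

(** Bivariate polynomials: {mpoly R[2]}, variable 0 = x, variable 1 = y.
    P_k = polynomials of total degree <= k, i.e. msize p <= k.+1. *)
Definition Pk (k : nat) (p : {mpoly R[2]}) : Prop := (msize p <= k.+1)%N.

Definition coords (x : pt) : 'I_2 -> R := fun j => if val j == 0%N then x.1 else x.2.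

Definition ev (p : {mpoly R[2]}) (x : pt) : R := meval (coords x) p.

Definition dx (p : {mpoly R[2]}) : {mpoly R[2]} := mderiv (0 : 'I_2) p.
Definition dy (p : {mpoly R[2]}) : {mpoly R[2]} := mderiv (1 : 'I_2) p.

(** 2D curls (conventions of the paper):
    curl of a scalar p : (d_y p, - d_x p);
    curl of a vector (w1,w2) : - d_y w1 + d_x w2. *)
Definition curl_s_zero (p : {mpoly R[2]}) : Prop := dy p = 0 /\ - dx p = 0.
Definition curl_v (w1 w2 : {mpoly R[2]}) : {mpoly R[2]} := - dy w1 + dx w2.

Definition ncross_s (n : pt) (p : R) : pt := (n.2 * p, - (n.1 * p)).
(** n x w x n := w - (w.n) n *)
Definition ntan (n w : pt) : pt :=
  (w.1 - dotp w n * n.1, w.2 - dotp w n * n.2).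

(** The parallelogram K with vertices a, a+e1, a+e1+e2, a+e2
    (det2 e1 e2 <> 0).  Its edges, numbered 0..3, are traversed in this
    vertex order: edge i = { P i + t * d i : 0 <= t <= 1 }. *)
Definition addp (u v : pt) : pt := (u.1 + v.1, u.2 + v.2).
Definition scalep (t : R) (u : pt) : pt := (t * u.1, t * u.2).
Definition oppp (u : pt) : pt := (- u.1, - u.2).

Definition edge_start (a e1 e2 : pt) (i : 'I_4) : pt :=
  match val i with
  | 0%N => a
  | 1%N => addp a e1
  | 2%N => addp (addp a e1) e2
  | _ => addp a e2
  end.

Definition edge_dir (e1 e2 : pt) (i : 'I_4) : pt :=
  match val i with
  | 0%N => e1
  | 1%N => e2
  | 2%N => oppp e1
  | _ => oppp e2
  end.

Definition on_edge (a e1 e2 : pt) (i : 'I_4) (x : pt) : Prop :=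
  exists t : R, 0 <= t <= 1 /\
    x = addp (edge_start a e1 e2 i) (scalep t (edge_dir e1 e2 i)).

(** Unit outward normal on edge i: the edge direction d rotated by -90
    degrees, normalised, with the sign of det2 e1 e2 (which is the
    orientation of the vertex ordering). *)
Definition normal (e1 e2 : pt) (i : 'I_4) : pt :=
  let d := edge_dir e1 e2 i in
  scalep (Num.sg (det2 e1 e2) / Num.sqrt (dotp d d)) (d.2, - d.1).

(** Functions on dK: since the normal is edge-wise defined (and a trace on
    dK is edge-wise), a function on dK is represented as a function on
    'I_4 * pt, where only the values at (i, x) with x on edge i matter. *)
Definition bdom (a e1 e2 : pt) : ('I_4 * pt) -> Prop :=
  fun ix => on_edge a e1 e2 ix.1 ix.2.

(** Finite dimension of a space S of V-valued functions on T, where functions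
    are identified when they agree on the domain D:
    S has dimension n iff there is a basis f_0..f_{n-1} of elements of S,
    linearly independent on D and spanning S (modulo equality on D). *)
Definition has_dim (T : Type) (D : T -> Prop) (S : (T -> pt) -> Prop) (n : nat) : Prop :=
  exists f : 'I_n -> T -> pt,
    (forall i, S (f i)) /\
    (forall c : 'I_n -> R,
        (forall x, D x -> \sum_(i < n) scalep (c i) (f i x) = (0, 0)) ->
        forall i, c i = 0) /\
    (forall g, S g -> exists c : 'I_n -> R,
        forall x, D x -> g x = \sum_(i < n) scalep (c i) (f i x)).

Definition Mspace (k : nat) (a e1 e2 : pt) : ('I_4 * pt -> pt) -> Prop :=
  fun mu => forall i : 'I_4, exists p, Pk k p /\
     forall x, on_edge a e1 e2 i x -> mu (i, x) = ncross_s (normal e1 e2 i) (ev p x).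

Definition Vtrace (k : nat) (a e1 e2 : pt) : ('I_4 * pt -> pt) -> Prop :=
  fun g => exists v, Pk k v /\ curl_s_zero v /\
     forall i x, on_edge a e1 e2 i x -> g (i, x) = ncross_s (normal e1 e2 i) (ev v x).

Definition Wtrace (k : nat) (a e1 e2 : pt) : ('I_4 * pt -> pt) -> Prop :=
  fun g => exists w1 w2, Pk k w1 /\ Pk k w2 /\ curl_v w1 w2 = 0 /\
     forall i x, on_edge a e1 e2 i x ->
       g (i, x) = ntan (normal e1 e2 i) (ev w1 x, ev w2 x).

End Defs.

(* Main.v *)
Require Import Defs.
From HB Require Import structures.
From mathcomp Require Import all_boot all_order all_algebra.
From mathcomp Require Import mpoly.
From mathcomp Require Import ring lra zify.
Import Order.TTheory GRing.Theory Num.Theory.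
Local Open Scope ring_scope.

Section Proof.
Variable R : rcfType.
Implicit Types (p q : {mpoly R[2]}).

Lemma psum1 (I : Type) (r : seq I) (P : pred I) (F : I -> pt R) :
  (\sum_(i <- r | P i) F i).1 = \sum_(i <- r | P i) (F i).1.
Proof. exact: (big_morph fst (op1 := +%R) (id1 := 0)). Qed.
Lemma psum2 (I : Type) (r : seq I) (P : pred I) (F : I -> pt R) :
  (\sum_(i <- r | P i) F i).2 = \sum_(i <- r | P i) (F i).2.
Proof. exact: (big_morph snd (op1 := +%R) (id1 := 0)). Qed.

Lemma poly01 (p : {poly R}) : (forall t : R, 0 <= t <= 1 -> p.[t] = 0) -> p = 0.
Proof.
move=> h; apply/eqP; apply: contraT => nz.
set rs := [seq ((i.+1)%:R)^-1 : R | i <- iota 0 (size p)].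
have := max_poly_roots nz (rs := rs).
rewrite size_map size_iota ltnn; apply.
- apply/allP => x /mapP [i _ ->]; apply/rootP/h.
  by rewrite invr_ge0 ler0n /= invf_le1 ?ltr0Sn // ler1n.
- rewrite map_inj_uniq ?iota_uniq // => i j /invr_inj /eqP.
  by rewrite eqr_nat eqSS => /eqP.
Qed.

Lemma poly01eq (p q : {poly R}) : (forall t : R, 0 <= t <= 1 -> p.[t] = q.[t]) -> p = q.
Proof.
move=> h; apply/eqP; rewrite -subr_eq0; apply/eqP/poly01 => t ht.
by rewrite hornerD hornerN h // subrr.
Qed.


Definition dle (d : nat) p := (msize p <= d.+1)%N.

Lemma dle_coef d p : (forall m, (d < mdeg m)%N -> p@_m = 0) -> dle d p.
Proof.
move=> h; rewrite /dle msizeE; apply/bigmax_leqP_seq => m hm _.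
rewrite ltnS leqNgt; apply/negP => /h /eqP; by rewrite mcoeff_eq0 hm.
Qed.

Lemma dle_coef0 d p m : dle d p -> (d < mdeg m)%N -> p@_m = 0.
Proof.
move=> h hm; apply/eqP; rewrite mcoeff_eq0; apply: msize_mdeg_ge.
exact: leq_trans h hm.
Qed.

Lemma dle_mono d d' p : (d <= d')%N -> dle d p -> dle d' p.
Proof. by move=> h1 h2; apply: leq_trans h2 _. Qed.

Lemma dleD d p q : dle d p -> dle d q -> dle d (p + q).
Proof.
move=> hp hq; apply: leq_trans (msizeD_le _ _) _; by rewrite geq_max; apply/andP.
Qed.

Lemma dleN d p : dle d p -> dle d (- p).
Proof. by rewrite /dle msizeN. Qed.

Lemma dleB d p q : dle d p -> dle d q -> dle d (p - q).
Proof. by move=> hp hq; apply: dleD => //; apply: dleN. Qed.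

Lemma dleZ d c p : dle d p -> dle d (c *: p).
Proof. by move=> h; apply: leq_trans (msizeZ_le _ _) h. Qed.

Lemma dleC d c : dle d (c%:MP).
Proof. by rewrite /dle msizeC; case: (c != 0). Qed.

Lemma dle0 d : dle d 0.
Proof. by rewrite /dle msize0. Qed.

Lemma dleX (i : 'I_2) : dle 1 'X_i.
Proof. by rewrite /dle msizeX mdeg1. Qed.

Lemma dleM d1 d2 p q : dle d1 p -> dle d2 q -> dle (d1 + d2) (p * q).
Proof.
move=> hp hq; have [->|nzp] := eqVneq p 0; first by rewrite mul0r dle0.
have [->|nzq] := eqVneq q 0; first by rewrite mulr0 dle0.
rewrite /dle msizeM //.
move: hp hq; rewrite /dle; case: (msize p) => [|a]; case: (msize q) => [|b] //=;
  rewrite ?ltnS; try lia.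
Qed.

Lemma dleXn d j p : dle d p -> dle (d * j) (p ^+ j).
Proof.
move=> h; elim: j => [|j ih]; first by rewrite expr0 muln0 -[1]/(1%:MP) dleC.
by rewrite exprS mulnS; apply: dleM.
Qed.

Lemma dle_sum d (I : Type) (r : seq I) (P : pred I) (F : I -> {mpoly R[2]}) :
  (forall i, P i -> dle d (F i)) -> dle d (\sum_(i <- r | P i) F i).
Proof.
move=> h; elim/big_rec: _ => [|i x Pi hx]; first exact: dle0.
by apply: dleD => //; apply: h.
Qed.

Lemma dle_deriv d (i : 'I_2) p : dle d.+1 p -> dle d (mderiv i p).
Proof.
move=> h; apply: dle_coef => m hm.
rewrite mcoeff_deriv (dle_coef0 _ _ _ h) ?mul0rn //.
by rewrite mdegD mdeg1 addn1 ltnS.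
Qed.


Definition lh (P D : pt R) (i : 'I_2) : {poly R} :=
  if val i == 0%N then P.1%:P + D.1 *: 'X else P.2%:P + D.2 *: 'X.
Definition lpoly (P D : pt R) p : {poly R} := mmap (@polyC R) (lh P D) p.

Lemma lpoly_ev P D p t : (lpoly P D p).[t] = ev p (addp P (scalep t D)).
Proof.
rewrite /lpoly /mmap /ev mevalE horner_sum; apply: eq_bigr => m _.
rewrite hornerCM /mmap1 horner_prod; congr (_ * _); apply: eq_bigr => i _.
rewrite horner_exp; congr (_ ^+ _); rewrite /lh /coords /=.
by case: ifP => _; rewrite hornerD hornerC hornerZ hornerX mulrC.
Qed.

Lemma size_lh P D i : (size (lh P D i) <= 2)%N.
Proof.
rewrite /lh; case: ifP => _; apply: leq_trans (size_add _ _) _;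
  rewrite geq_max (leq_trans (size_polyC_leq1 _)) //=;
  by apply: leq_trans (size_scale_leq _ _) _; rewrite size_polyX.
Qed.

Lemma mdeg2 (m : 'X_{1..2}) : mdeg m = (m ord0 + m (lift ord0 ord0))%N.
Proof. by rewrite mdegE !big_ord_recl big_ord0 addn0. Qed.

Lemma mmap1_2 (S : comNzRingType) (h : 'I_2 -> S) (m : 'X_{1..2}) :
  mmap1 h m = h ord0 ^+ m ord0 * h (lift ord0 ord0) ^+ m (lift ord0 ord0).
Proof. by rewrite /mmap1 !big_ord_recl big_ord0 mulr1. Qed.

Lemma lpoly_size P D p : (size (lpoly P D p) <= msize p)%N.
Proof.
rewrite /lpoly /mmap; apply: leq_trans (size_sum _ _ _) _.
apply/bigmax_leqP_seq => m hm _; rewrite mul_polyC.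
apply: leq_trans (size_scale_leq _ _) _; rewrite mmap1_2.
apply: leq_trans (size_mul_leq _ _) _.
have h1 := size_exp_leq (lh P D ord0) (m ord0).
have h2 := size_exp_leq (lh P D (lift ord0 ord0)) (m (lift ord0 ord0)).
have s1 := size_lh P D ord0; have s2 := size_lh P D (lift ord0 ord0).
have := msize_mdeg_lt hm; rewrite mdeg2.
set a := m ord0; set b := m (lift ord0 ord0).
set x := size (lh P D ord0) in h1 s1; set y := size (lh P D (lift ord0 ord0)) in h2 s2.
have ha : (((x.-1 * a).+1) <= a.+1)%N.
  by case: x s1 {h1} => [|[|[|]]] //= _; rewrite ?mul0n ?mul1n.
have hb : (((y.-1 * b).+1) <= b.+1)%N.
  by case: y s2 {h2} => [|[|[|]]] //= _; rewrite ?mul0n ?mul1n.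
move=> hd; have e1 := leq_trans h1 ha; have e2 := leq_trans h2 hb; move: e1 e2 hd; rewrite -/a -/b; clear; move: (size (lh P D ord0 ^+ a)) (size (lh P D (lift ord0 ord0) ^+ b)) (mmeasure mdeg p) => u v M; clearbody a b; lia.
Qed.


Lemma lpolyD P D p q : lpoly P D (p + q) = lpoly P D p + lpoly P D q.
Proof. exact: mmapD. Qed.
Lemma lpoly0 P D : lpoly P D 0 = 0.
Proof. exact: mmap0. Qed.
Lemma lpolyZ P D c p : lpoly P D (c *: p) = c *: lpoly P D p.
Proof. by rewrite /lpoly mmapZ mul_polyC. Qed.
Lemma lpolyX P D m : lpoly P D 'X_[m] =
  lh P D ord0 ^+ m ord0 * lh P D (lift ord0 ord0) ^+ m (lift ord0 ord0).
Proof. by rewrite /lpoly mmapX mmap1_2. Qed.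

Lemma I2_0 : (0 : 'I_2) = ord0. Proof. exact/val_inj. Qed.
Lemma I2_1 : (1 : 'I_2) = lift ord0 ord0. Proof. exact/val_inj. Qed.

Lemma lpoly_deriv P D p :
  (lpoly P D p)^`() = D.1 *: lpoly P D (dx p) + D.2 *: lpoly P D (dy p).
Proof.
rewrite /dx /dy I2_0 I2_1.
elim/mpolyind: p => [|c m p _ _ ih].
  by rewrite !mderiv0 !lpoly0 deriv0 !scaler0 addr0.
rewrite lpolyD derivD ih !mderivD !lpolyD !mderivZ !lpolyZ !mderivX !lpolyZ !lpolyX.
rewrite !mnmBE !mnm1E /= !subn0 !subn1.
have d0 : (lh P D ord0)^`() = D.1%:P.
  by rewrite /lh /= derivD derivC derivZ derivX alg_polyC add0r.
have d1 : (lh P D (lift ord0 ord0))^`() = D.2%:P.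
  by rewrite /lh /= derivD derivC derivZ derivX alg_polyC add0r.
rewrite derivZ derivM !deriv_exp d0 d1.
rewrite -!mul_polyC !rmorph_nat.
set a := m ord0; set b := m (lift ord0 ord0).
set L0 := lh P D ord0; set L1 := lh P D (lift ord0 ord0).
clearbody L0 L1. move: (lpoly P D _) (lpoly P D _) ((D.1)%:P) ((D.2)%:P) (c%:P) L0 L1 => q1 q2 x1 x2 cc u v. ring.
Qed.


Definition lin_mp (c0 c1 c2 : R) : {mpoly R[2]} :=
  c0%:MP + c1 *: 'X_(0 : 'I_2) + c2 *: 'X_(1 : 'I_2).

Lemma ev_lin c0 c1 c2 x : ev (lin_mp c0 c1 c2) x = c0 + c1 * x.1 + c2 * x.2.
Proof. by rewrite /ev /lin_mp !mevalD mevalC !mevalZ !mevalXU /coords. Qed.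

Lemma dle_lin c0 c1 c2 : dle 1 (lin_mp c0 c1 c2).
Proof. by rewrite /lin_mp; apply: dleD; [apply: dleD|]; rewrite ?dleC //; apply: dleZ; apply: dleX. Qed.

Definition compA (o u v : pt R) p :=
  p \mPo [tuple lin_mp o.1 u.1 v.1; lin_mp o.2 u.2 v.2].

Lemma ev_comp o u v p x :
  ev (compA o u v p) x = ev p (o.1 + u.1 * x.1 + v.1 * x.2, o.2 + u.2 * x.1 + v.2 * x.2).
Proof.
rewrite /ev /compA comp_mpoly_meval; apply: meval_eq => i.
by case: i => [[|[|//]] hi]; rewrite (tnth_nth 0) /= -/(ev _ x) ev_lin.
Qed.

Lemma dle_comp d o u v p : dle d p -> dle d (compA o u v p).
Proof.
move=> h; rewrite /compA comp_mpolyE big_seq; apply: dle_sum => m hm.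
apply: dleZ; rewrite !big_ord_recl big_ord0 mulr1.
have hd : (mdeg m <= d)%N := leq_trans (msize_mdeg_lt hm) h.
apply: (@dle_mono (1 * m ord0 + 1 * m (lift ord0 ord0))%N).
  by rewrite !mul1n -mdeg2.
by apply: dleM; apply: dleXn; rewrite (tnth_nth 0) /=; apply: dle_lin.
Qed.


Notation i0 := (ord0 : 'I_2).
Notation i1 := (lift ord0 ord0 : 'I_2).

Lemma mnm_eq2 (m1 m2 : 'X_{1..2}) : m1 i0 = m2 i0 -> m1 i1 = m2 i1 -> m1 = m2.
Proof. move=> h0 h1; apply/mnmP => -[[|[|//]] hi]; [have -> : Ordinal hi = i0 by apply/val_inj | have -> : Ordinal hi = i1 by apply/val_inj]; done. Qed.

Lemma divnK1 (x : R) n : x / (n.+1)%:R *+ n.+1 = x.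
Proof. by rewrite -(mulr_natr (x / (n.+1)%:R) n.+1) divfK // pnatr_eq0. Qed.

Lemma mulnK1 (x : R) n : x *+ n.+1 / (n.+1)%:R = x.
Proof. by rewrite -(mulr_natr x n.+1) mulfK // pnatr_eq0. Qed.

Lemma poincare k w1 w2 : dle k w1 -> dle k w2 -> dx w2 = dy w1 ->
  exists phi, dle k.+1 phi /\ dx phi = w1 /\ dy phi = w2.
Proof.
rewrite /dx /dy I2_0 I2_1 => h1 h2 hc.
pose E (m : 'X_{1..2}) : R :=
  if (0 < m i0)%N then w1@_(m - U_(i0)) / (m i0)%:R
  else if (0 < m i1)%N then w2@_(m - U_(i1)) / (m i1)%:R else 0.
pose phi := \sum_(m : 'X_{1..2 < k.+2}) E m *: 'X_[m].
have hphi : dle k.+1 phi.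
  apply: dle_sum => m _; apply: dleZ; rewrite /dle msizeX; exact: bmdeg.
have cphi m : (mdeg m < k.+2)%N -> phi@_m = E m by move=> hm; apply: mcoeff_mpoly.
have e00 : U_(i0)%MM i0 = 1%N by rewrite mnm1E.
have e01 : U_(i0)%MM i1 = 0%N by rewrite mnm1E.
have e10 : U_(i1)%MM i0 = 0%N by rewrite mnm1E.
have e11 : U_(i1)%MM i1 = 1%N by rewrite mnm1E.
exists phi; split=> //; split; apply/mpolyP => m; rewrite mcoeff_deriv.
- have [hm|hm] := ltnP (mdeg m) k.+1; last first.
    by rewrite (dle_coef0 _ _ _ hphi) ?mul0rn ?(dle_coef0 _ _ _ h1) // mdegD mdeg1 addn1.
  rewrite cphi ?mdegD ?mdeg1 ?addn1 // /E mnmDE e00 addn1 /= addmK.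
  exact: divnK1.
- have [hm|hm] := ltnP (mdeg m) k.+1; last first.
    by rewrite (dle_coef0 _ _ _ hphi) ?mul0rn ?(dle_coef0 _ _ _ h2) // mdegD mdeg1 addn1.
  rewrite cphi ?mdegD ?mdeg1 ?addn1 // /E !mnmDE e10 e11 addn0 addn1 /=.
  case: ifP => hm0; last by rewrite addmK divnK1.
  have := congr1 (mcoeff (m - U_(i0))) hc; rewrite !mcoeff_deriv.
  have -> : (m - U_(i0) + U_(i0))%MM = m.
    by apply: mnm_eq2; rewrite !(mnmDE, mnmBE) ?e00 ?e01 ?e10 ?e11; lia.
  have -> : (m - U_(i0) + U_(i1))%MM = (m + U_(i1) - U_(i0))%MM.
    by apply: mnm_eq2; rewrite !(mnmDE, mnmBE) ?e00 ?e01 ?e10 ?e11; lia.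
  rewrite !mnmBE e00 e01 subn0 subn1 prednK // => h.
  rewrite -mulrnAl -h; move: hm0; case: (m i0) => // n _; exact: mulnK1.
Qed.


Lemma curl0_const (v : {mpoly R[2]}) : curl_s_zero v -> v = (v@_0)%:MP.
Proof.
rewrite /curl_s_zero /dx /dy I2_0 I2_1 => -[hy hx].
have hx' : v^`M(i0) = 0 by apply/eqP; rewrite -oppr_eq0; apply/eqP.
have e00 : U_(i0)%MM i0 = 1%N by rewrite mnm1E.
have e01 : U_(i0)%MM i1 = 0%N by rewrite mnm1E.
have e10 : U_(i1)%MM i0 = 0%N by rewrite mnm1E.
have e11 : U_(i1)%MM i1 = 1%N by rewrite mnm1E.
apply/mpolyP => m; rewrite mcoeffC.
have [->|nz] := eqVneq m 0%MM; first by rewrite mulr1.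
rewrite mulr0.
case h0: (0 < m i0)%N.
  have := congr1 (mcoeff (m - U_(i0))) hx'; rewrite mcoeff_deriv mcoeff0.
  have -> : (m - U_(i0) + U_(i0))%MM = m.
    by apply: mnm_eq2; rewrite !(mnmDE, mnmBE) ?e00 ?e01 ?e10 ?e11; lia.
  by move/eqP; rewrite mulrn_eq0 => /orP [//|/eqP].
case h1: (0 < m i1)%N.
  have := congr1 (mcoeff (m - U_(i1))) hy; rewrite mcoeff_deriv mcoeff0.
  have -> : (m - U_(i1) + U_(i1))%MM = m.
    by apply: mnm_eq2; rewrite !(mnmDE, mnmBE) ?e00 ?e01 ?e10 ?e11; lia.
  by move/eqP; rewrite mulrn_eq0 => /orP [//|/eqP].
exfalso; move/negP: nz; apply; apply/eqP/mnm_eq2; rewrite mnm0E; lia.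
Qed.

Lemma pairE (u v : pt R) : u.1 = v.1 -> u.2 = v.2 -> u = v.
Proof. by case: u v => [? ?] [? ?] /= -> ->. Qed.

Lemma sum_scalep (I : finType) (c r : I -> R) (V : pt R) :
  \sum_b scalep (c b) (scalep (r b) V) = scalep (\sum_b c b * r b) V.
Proof.
apply: pairE; rewrite ?psum1 ?psum2 /= mulr_suml; apply: eq_bigr => b _; ring.
Qed.

Lemma scalep_eq0 s (V : pt R) : scalep s V = 0 -> V != 0 -> s = 0.
Proof.
case: V => v1 v2 /= [] /eqP; rewrite mulf_eq0 => /orP [/eqP //|/eqP ->] /eqP.
rewrite mulf_eq0 => /orP [/eqP //|/eqP ->]; by rewrite eqxx.
Qed.

Lemma sumI (I : finType) (F : I -> pt R) :
  \sum_(j < #|I|) F (enum_val j) = \sum_b F b.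
Proof. by rewrite -(big_enum_val (A := I)). Qed.

Lemma GEN (a e1 e2 : pt R) (S : ('I_4 * pt R -> pt R) -> Prop)
  (sig : 'I_4 -> R -> pt R) (V : 'I_4 -> pt R) (I : finType)
  (f : I -> ('I_4 * pt R -> pt R)) (B : I -> 'I_4 -> {poly R}) :
  (forall i x, on_edge a e1 e2 i x -> exists t, 0 <= t <= 1 /\ x = sig i t) ->
  (forall i t, 0 <= t <= 1 -> on_edge a e1 e2 i (sig i t)) ->
  (forall i, V i != 0) ->
  (forall b, S (f b)) ->
  (forall b i t, 0 <= t <= 1 -> f b (i, sig i t) = scalep (B b i).[t] (V i)) ->
  (forall g, S g -> exists c : I -> R, forall i t, 0 <= t <= 1 ->
       g (i, sig i t) = scalep (\sum_b c b *: B b i).[t] (V i)) ->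
  (forall c : I -> R, (forall i, \sum_b c b *: B b i = 0) -> forall b, c b = 0) ->
  has_dim (bdom a e1 e2) S #|I|.
Proof.
move=> hs1 hs2 hV hS hf hspan hind.
exists (fun j => f (enum_val j)); split; first by move=> j; apply: hS.
split.
- move=> c hc j.
  have h0 : forall b, c (enum_rank b) = 0.
    apply: hind => i; apply: poly01 => t ht.
    have := hc (i, sig i t) (hs2 _ _ ht).
    have -> : \sum_(j < #|I|) scalep (c j) (f (enum_val j) (i, sig i t)) =
      \sum_b scalep (c (enum_rank b)) (f b (i, sig i t)).
      by rewrite -(@sumI I (fun b => scalep (c (enum_rank b)) (f b (i, sig i t)))); apply: eq_bigr => j0 _; rewrite enum_valK.
    under eq_bigr => b _ do rewrite hf //.
    rewrite sum_scalep => /scalep_eq0 /(_ (hV i)) <-.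
    by rewrite horner_sum; apply: eq_bigr => b _; rewrite hornerZ.
  by rewrite -(enum_valK j) h0.
- move=> g /hspan [c hc]; exists (fun j => c (enum_val j)) => -[i x] /= hx.
  rewrite /bdom /= in hx; have [t [ht ->]] := hs1 _ _ hx.
  rewrite (@sumI I (fun b => scalep (c b) (f b (i, sig i t)))) hc //.
  under [RHS]eq_bigr => b _ do rewrite hf //.
  rewrite sum_scalep; congr scalep.
  by rewrite horner_sum; apply: eq_bigr => b _; rewrite hornerZ.
Qed.


Lemma ntan_formula (n d w : pt R) (c : R) : n = scalep c (d.2, - d.1) ->
  c * c * dotp d d = 1 -> ntan n w = scalep (dotp w d / dotp d d) d.
Proof.
move=> -> hc.
have hdd : dotp d d != 0.
  by apply/eqP => h; move: hc; rewrite h mulr0 => /eqP; rewrite eq_sym oner_eq0.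
have hinv : (dotp d d)^-1 = c * c by apply: (mulIf hdd); rewrite mulVf // hc.
case: d hc hdd hinv => d1 d2; case: w => w1 w2.
rewrite /ntan /dotp /scalep /= => hc _ hinv.
apply: pairE => /=; rewrite hinv; apply/eqP; rewrite -subr_eq0; apply/eqP.
- transitivity (w1 * (1 - c * c * (d1 * d1 + d2 * d2))); first by ring.
  by rewrite hc subrr mulr0.
- transitivity (w2 * (1 - c * c * (d1 * d1 + d2 * d2))); first by ring.
  by rewrite hc subrr mulr0.
Qed.

Lemma dot0 (u : pt R) : dotp u u = 0 -> u = 0.
Proof.
case: u => u1 u2; rewrite /dotp /= => h.
have h1 : u1 * u1 = 0 by nra.
have h2 : u2 * u2 = 0 by nra.
move/eqP: h1; rewrite mulf_eq0 orbb => /eqP ->.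
by move/eqP: h2; rewrite mulf_eq0 orbb => /eqP ->.
Qed.

Lemma e_nz (e1 e2 : pt R) : det2 e1 e2 != 0 -> dotp e1 e1 != 0 /\ dotp e2 e2 != 0.
Proof.
move=> hd; split; apply/eqP => /dot0 h; move: hd; rewrite h /det2 /=;
  by rewrite ?mul0r ?mulr0 ?subrr eqxx.
Qed.

Lemma dir_dd (e1 e2 : pt R) i : det2 e1 e2 != 0 ->
  dotp (edge_dir e1 e2 i) (edge_dir e1 e2 i) != 0.
Proof.
move=> /e_nz [h1 h2]; rewrite /edge_dir.
case: i => -[|[|[|[|//]]]] hi /=; rewrite ?h1 ?h2 //.
- by move: h1; rewrite /dotp /= !mulrNN.
- by move: h2; rewrite /dotp /= !mulrNN.
Qed.

Lemma normal_c (e1 e2 : pt R) i : det2 e1 e2 != 0 ->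
  let d := edge_dir e1 e2 i in
  let c := Num.sg (det2 e1 e2) / Num.sqrt (dotp d d) in
  normal e1 e2 i = scalep c (d.2, - d.1) /\ c * c * dotp d d = 1.
Proof.
move=> hdet d c; split; first by [].
have hdd := dir_dd _ _ i hdet; rewrite -/d in hdd.
have hpos : 0 <= dotp d d by rewrite /dotp; nra.
have s1 : Num.sg (det2 e1 e2) * Num.sg (det2 e1 e2) = 1 by rewrite -expr2 sqr_sg hdet.
have s2 : Num.sqrt (dotp d d) * Num.sqrt (dotp d d) = dotp d d by rewrite -expr2 sqr_sqrtr.
have hs : Num.sqrt (dotp d d) != 0 by apply/eqP => h; move: s2; rewrite h mulr0 => /esym/eqP; rewrite (negbTE hdd).
rewrite /c [LHS](_ : _ = (Num.sg (det2 e1 e2) * Num.sg (det2 e1 e2)) * dotp d d /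
   (Num.sqrt (dotp d d) * Num.sqrt (dotp d d))); last by field.
by rewrite s1 s2 mul1r divff.
Qed.

Lemma ntan_dir (e1 e2 : pt R) i w : det2 e1 e2 != 0 ->
  ntan (normal e1 e2 i) w = scalep (dotp w (edge_dir e1 e2 i) /
     dotp (edge_dir e1 e2 i) (edge_dir e1 e2 i)) (edge_dir e1 e2 i).
Proof. by move=> hd; have [h1 h2] := normal_c _ _ i hd; apply: ntan_formula h1 h2. Qed.

Definition Vn (e1 e2 : pt R) i : pt R := ((normal e1 e2 i).2, - (normal e1 e2 i).1).

Lemma Vn_nz (e1 e2 : pt R) i : det2 e1 e2 != 0 -> Vn e1 e2 i != 0.
Proof.
move=> hd; have [h1 h2] := normal_c _ _ i hd.
apply/eqP => h; have : dotp (Vn e1 e2 i) (Vn e1 e2 i) = 0 by rewrite h /dotp /= !mulr0 addr0.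
rewrite /Vn h1 /= /dotp /=.
set c := _ / _; set d := edge_dir e1 e2 i.
move=> h3; move: h2; rewrite -/c -/d.
have -> : c * c * dotp d d = (c * - d.1) * (c * - d.1) + - (c * d.2) * - (c * d.2).
  by rewrite /dotp; ring.
by rewrite h3 => /eqP; rewrite eq_sym oner_eq0.
Qed.

Lemma ncrossE (n : pt R) (p : R) : ncross_s n p = scalep p (n.2, - n.1).
Proof. by apply: pairE => /=; ring. Qed.


Lemma poly_expand n (q : {poly R}) : (size q <= n)%N -> q = \sum_(j < n) q`_j *: 'X^j.
Proof.
move=> hs; apply/polyP => l; rewrite coef_sum.
under eq_bigr => j _ do rewrite coefZ coefXn.
have [hl|hl] := ltnP l n.
  rewrite (bigD1 (Ordinal hl)) //= eqxx mulr1 big1 ?addr0 // => j hj.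
  suff -> : (l == j) = false by rewrite mulr0.
  by apply/negbTE; move: hj; apply: contra => /eqP e; apply/eqP/val_inj; rewrite /= e.
rewrite big1 ?nth_default //; first exact: leq_trans hs hl.
move=> j _; have : l != j by rewrite neq_ltn (leq_trans (ltn_ord j) hl) orbT.
by move/negbTE => ->; rewrite mulr0.
Qed.

Lemma coef_expand n (c : 'I_n -> R) (j : 'I_n) : (\sum_(l < n) c l *: 'X^l)`_j = c j.
Proof.
rewrite coef_sum (bigD1 j) //= coefZ coefXn eqxx mulr1 big1 ?addr0 // => l hl.
rewrite coefZ coefXn; suff -> : (j == l :> nat) = false by rewrite mulr0.
by apply/negbTE; move: hl; apply: contra => /eqP e; apply/eqP/val_inj; rewrite /= e.
Qed.

Lemma ev_mul (p q : {mpoly R[2]}) x : ev (p * q) x = ev p x * ev q x.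
Proof. exact: mevalM. Qed.
Lemma ev_exp (p : {mpoly R[2]}) j x : ev (p ^+ j) x = ev p x ^+ j.
Proof.
elim: j => [|j ih]; first by rewrite !expr0 /ev meval1.
by rewrite !exprS ev_mul ih.
Qed.

Lemma sumpair (V : nmodType) (I J : finType) (F : I * J -> V) :
  \sum_b F b = \sum_i \sum_j F (i, j).
Proof. by rewrite pair_big; apply: eq_bigr => -[i j]. Qed.

Section Spaces.
Variables (a e1 e2 : pt R).
Hypothesis hdet : det2 e1 e2 != 0.

Definition sigM (i : 'I_4) (t : R) : pt R :=
  addp (edge_start a e1 e2 i) (scalep t (edge_dir e1 e2 i)).

Lemma sigM1 i x : on_edge a e1 e2 i x -> exists t, 0 <= t <= 1 /\ x = sigM i t.
Proof. by []. Qed.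
Lemma sigM2 i t : 0 <= t <= 1 -> on_edge a e1 e2 i (sigM i t).
Proof. by move=> ht; exists t. Qed.

Definition Tmp (i : 'I_4) : {mpoly R[2]} :=
  let P := edge_start a e1 e2 i in let d := edge_dir e1 e2 i in
  lin_mp (- (P.1 * d.1 + P.2 * d.2) / dotp d d) (d.1 / dotp d d) (d.2 / dotp d d).

Lemma ev_Tmp i t : ev (Tmp i) (sigM i t) = t.
Proof.
rewrite /Tmp ev_lin /sigM /=.
have := dir_dd _ _ i hdet; move: (edge_start a e1 e2 i) (edge_dir e1 e2 i) => P d.
rewrite /dotp => hd; field.
by [].
Qed.

Lemma Mdim k : has_dim (bdom a e1 e2) (Mspace k a e1 e2) (4 * k.+1).
Proof.
have -> : (4 * k.+1)%N = #|{: 'I_4 * 'I_k.+1}| by rewrite card_prod !card_ord.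
pose f (b : 'I_4 * 'I_k.+1) : 'I_4 * pt R -> pt R := fun ix =>
  if ix.1 == b.1 then ncross_s (normal e1 e2 ix.1) (ev (Tmp b.1 ^+ b.2) ix.2) else 0.
pose B (b : 'I_4 * 'I_k.+1) (i : 'I_4) : {poly R} := if i == b.1 then 'X^(b.2) else 0.
apply: (@GEN a e1 e2 _ sigM (Vn e1 e2) _ f B sigM1 sigM2 (Vn_nz _ _ ^~ hdet)).
- move=> [i j] i'; exists (if i' == i then Tmp i ^+ j else 0); split.
    case: ifP => _; last exact: dle0.
    apply: (@dle_mono (1 * j)); first by rewrite mul1n -ltnS.
    by apply: dleXn; apply: dle_lin.
  move=> x _; rewrite /f /=; case: ifP => _ //.
  by rewrite /ev meval0; apply: pairE => /=; rewrite !mulr0 ?oppr0.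
- move=> [i j] i' t ht; rewrite /f /B /=; case: ifP => [/eqP ->|_].
    by rewrite ev_exp ev_Tmp hornerXn ncrossE.
  by rewrite horner0; apply: pairE => /=; rewrite mul0r ?oppr0.
- move=> g hg; have [p hp] := fin_all_exists hg.
  exists (fun b : 'I_4 * 'I_k.+1 => (lpoly (edge_start a e1 e2 b.1) (edge_dir e1 e2 b.1) (p b.1))`_b.2).
  move=> i t ht; have [_ hpi] := hp i; rewrite hpi; last exact: sigM2. rewrite ncrossE.
  congr scalep; rewrite sumpair.
  rewrite (bigD1 i) //= [X in _ + X]big1 ?addr0; last first.
    by move=> i' hi'; apply: big1 => j _; rewrite /B /= eq_sym (negbTE hi') scaler0.
  rewrite /B /= eqxx -[in RHS]poly_expand /sigM ?lpoly_ev //.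
  by apply: leq_trans (lpoly_size _ _ _) _; have [hk _] := hp i.
- move=> c hc [i j]; have := congr1 (fun q : {poly R} => q`_j) (hc i).
  rewrite sumpair.
  rewrite (bigD1 i) //= [X in _ + X]big1 ?addr0; last first.
    by move=> i' hi'; apply: big1 => l _; rewrite /B /= eq_sym (negbTE hi') scaler0.
  by rewrite /B /= eqxx coef_expand coef0.
Qed.

Lemma Vdim k : has_dim (bdom a e1 e2) (Vtrace k a e1 e2) 1.
Proof.
suff h : has_dim (bdom a e1 e2) (Vtrace k a e1 e2) #|{: 'I_1}| by rewrite card_ord in h.
pose f (b : 'I_1) : 'I_4 * pt R -> pt R := fun ix => ncross_s (normal e1 e2 ix.1) 1.
pose B (b : 'I_1) (i : 'I_4) : {poly R} := 1.
apply: (@GEN a e1 e2 _ sigM (Vn e1 e2) _ f B sigM1 sigM2 (Vn_nz _ _ ^~ hdet)).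
- move=> b; exists 1; split; first by rewrite /Pk msize1.
  split; first by rewrite /curl_s_zero /dx /dy -(@mpolyC1 2 R) !mderivC oppr0.
  by move=> i x _; rewrite /f /ev meval1.
- by move=> b i t _; rewrite /f /B hornerC ncrossE.
- move=> g [v [_ [hc hv]]]; exists (fun _ => v@_0) => i t ht.
  rewrite hv; last exact: sigM2.
  rewrite (curl0_const _ hc) /ev mevalC big_ord1 /B hornerZ hornerC mulr1.
  by rewrite mcoeffC eqxx mulr1 ncrossE.
- move=> c hc b; have := hc ord0; rewrite big_ord1 /B => /eqP.
  rewrite alg_polyC polyC_eq0 => /eqP; by rewrite (ord1 b).
Qed.


Definition Apt (s u : R) : pt R := (a.1 + s * e1.1 + u * e2.1, a.2 + s * e1.2 + u * e2.2).
Definition Smp : {mpoly R[2]} :=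
  lin_mp ((a.2 * e2.1 - a.1 * e2.2) / det2 e1 e2) (e2.2 / det2 e1 e2) (- e2.1 / det2 e1 e2).
Definition Ump : {mpoly R[2]} :=
  lin_mp ((a.1 * e1.2 - a.2 * e1.1) / det2 e1 e2) (- e1.2 / det2 e1 e2) (e1.1 / det2 e1 e2).

Lemma ev_S s u : ev Smp (Apt s u) = s.
Proof. by rewrite /Smp ev_lin /Apt /=; move: hdet; rewrite /det2 => hd; field. Qed.
Lemma ev_U s u : ev Ump (Apt s u) = u.
Proof. by rewrite /Ump ev_lin /Apt /=; move: hdet; rewrite /det2 => hd; field. Qed.
Lemma A_SU x : Apt (ev Smp x) (ev Ump x) = x.
Proof.
rewrite /Apt /Smp /Ump !ev_lin; move: hdet; rewrite /det2 => hd.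
by apply: pairE => /=; field.
Qed.

Definition sS (i : 'I_4) (t : R) : R :=
  match val i with 0 => t | 1 => 1 | 2 => t | _ => 0 end.
Definition sU (i : 'I_4) (t : R) : R :=
  match val i with 0 => 0 | 1 => t | 2 => 1 | _ => t end.
Definition sigW i t := Apt (sS i t) (sU i t).
Definition DW (i : 'I_4) : pt R := if odd i then e2 else e1.
Definition baseW i := sigW i 0.
Definition VW i := scalep (dotp (DW i) (DW i))^-1 (DW i).

Lemma sigW_lin i t : sigW i t = addp (baseW i) (scalep t (DW i)).
Proof.
by rewrite /baseW /sigW /Apt /DW /sS /sU; case: i => -[|[|[|[|//]]]] hi; apply: pairE => /=; ring.
Qed.

Lemma sigW1 i x : on_edge a e1 e2 i x -> exists t, 0 <= t <= 1 /\ x = sigW i t.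
Proof.
move=> [t [ht ->]]; rewrite /sigW /Apt /sS /sU /edge_start /edge_dir.
case: i => -[|[|[|[|//]]]] hi /=.
- by exists t; split => //; apply: pairE => /=; ring.
- by exists t; split => //; apply: pairE => /=; ring.
- exists (1 - t); split; first by move: ht => /andP [h1 h2]; apply/andP; split; lra.
  by apply: pairE => /=; ring.
- exists (1 - t); split; first by move: ht => /andP [h1 h2]; apply/andP; split; lra.
  by apply: pairE => /=; ring.
Qed.

Lemma sigW2 i t : 0 <= t <= 1 -> on_edge a e1 e2 i (sigW i t).
Proof.
move=> ht; rewrite /on_edge /sigW /Apt /sS /sU /edge_start /edge_dir.
case: i => -[|[|[|[|//]]]] hi /=.
- by exists t; split => //; apply: pairE => /=; ring.
- by exists t; split => //; apply: pairE => /=; ring.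
- exists (1 - t); split; first by move: ht => /andP [h1 h2]; apply/andP; split; lra.
  by apply: pairE => /=; ring.
- exists (1 - t); split; first by move: ht => /andP [h1 h2]; apply/andP; split; lra.
  by apply: pairE => /=; ring.
Qed.

Lemma VW_nz i : VW i != 0.
Proof.
have [h1 h2] := e_nz _ _ hdet.
have hD : dotp (DW i) (DW i) != 0 by rewrite /DW; case: ifP.
apply/eqP => h; have : dotp (VW i) (VW i) = 0 by rewrite h /dotp /= !mulr0 addr0.
rewrite /VW /dotp /=; move: hD; rewrite /dotp; move: (DW i) => [d1 d2] /= hD h3.
move/eqP: hD; apply; move: h3.
set s := (d1 * d1 + d2 * d2)^-1.
have -> : s * d1 * (s * d1) + s * d2 * (s * d2) = s * s * (d1 * d1 + d2 * d2) by ring.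
move/eqP; rewrite !mulf_eq0 orbb => /orP [/eqP hs|/eqP //].
by move: hs; rewrite /s => /eqP; rewrite invr_eq0 => /eqP.
Qed.

Lemma TR (phi : {mpoly R[2]}) i t :
  ntan (normal e1 e2 i) (ev (dx phi) (sigW i t), ev (dy phi) (sigW i t)) =
  scalep ((lpoly (baseW i) (DW i) phi)^`().[t]) (VW i).
Proof.
rewrite ntan_dir // lpoly_deriv hornerD !hornerZ !lpoly_ev -!sigW_lin.
move: (ev (dx phi) _) (ev (dy phi) _) => w1 w2.
have [h1 h2] := e_nz _ _ hdet.
rewrite /VW /DW /edge_dir.
case: i => -[|[|[|[|//]]]] hi /=.
- by apply: pairE; rewrite /dotp /=; ring.
- by apply: pairE; rewrite /dotp /=; ring.
- have -> : dotp (oppp e1) (oppp e1) = dotp e1 e1 by rewrite /dotp /=; ring.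
  by apply: pairE; rewrite /dotp /=; ring.
- have -> : dotp (oppp e2) (oppp e2) = dotp e2 e2 by rewrite /dotp /=; ring.
  by apply: pairE; rewrite /dotp /=; ring.
Qed.

Definition LP (p q : nat) (i : 'I_4) : {poly R} :=
  match val i with
  | 0 => (q == 0%N)%:R *: 'X^p
  | 1 => 'X^q
  | 2 => 'X^p
  | _ => (p == 0%N)%:R *: 'X^q
  end.

Definition phimon (p q : nat) : {mpoly R[2]} := Smp ^+ p * Ump ^+ q.

Lemma lpoly_mon (p q : nat) i : lpoly (baseW i) (DW i) (phimon p q) = LP p q i.
Proof.
apply: poly01eq => t _; rewrite lpoly_ev -sigW_lin /phimon ev_mul !ev_exp /sigW ev_S ev_U.
rewrite /LP /sS /sU; case: i => -[|[|[|[|//]]]] hi /=;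
  rewrite ?hornerZ ?hornerXn ?expr1n ?mulr1 ?mul1r ?expr0n //; ring.
Qed.

Lemma dle_phimon (p q : nat) : dle (p + q) (phimon p q).
Proof.
have h1 := dleXn 1 p Smp (dle_lin _ _ _); have h2 := dleXn 1 q Ump (dle_lin _ _ _); rewrite !mul1n in h1 h2; exact: dleM.
Qed.


Definition Dat (p q : nat) (i : 'I_4) : {poly R} := (LP p q i)^`().

Section WBasis.
Variable k : nat.
Hypothesis hk : (1 <= k)%N.

Definition IW := (('I_k.+1 + 'I_k.+1) + (('I_k.-1 + 'I_k.-1) + 'I_1))%type.
Definition mon (b : IW) : nat * nat :=
  match b with
  | inl (inl j) => ((j : nat).+1, 0%N)
  | inl (inr j) => (0%N, (j : nat).+1)
  | inr (inl (inl j)) => ((j : nat).+2, 1%N)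
  | inr (inl (inr j)) => (1%N, (j : nat).+2)
  | inr (inr _) => (1%N, 1%N)
  end.
Definition BW (b : IW) : 'I_4 -> {poly R} := Dat (mon b).1 (mon b).2.

Definition InSpan (Q : 'I_4 -> {poly R}) :=
  exists c : IW -> R, forall i, \sum_b c b *: BW b i = Q i.

Lemma InSpan_ext Q Q' : InSpan Q -> (forall i, Q i = Q' i) -> InSpan Q'.
Proof. by move=> [c hc] h; exists c => i; rewrite hc h. Qed.
Arguments InSpan_ext {Q Q'}.


Lemma InSpan0 : InSpan (fun _ => 0).
Proof. by exists (fun _ => 0) => i; apply: big1 => b _; rewrite scale0r. Qed.

Lemma InSpanD Q Q' : InSpan Q -> InSpan Q' -> InSpan (fun i => Q i + Q' i).
Proof.
move=> [c hc] [c' hc']; exists (fun b => c b + c' b) => i.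
by rewrite -hc -hc' -big_split; apply: eq_bigr => b _; rewrite scalerDl.
Qed.
Arguments InSpanD {Q Q'}.


Lemma InSpanZ s Q : InSpan Q -> InSpan (fun i => s *: Q i).
Proof.
move=> [c hc]; exists (fun b => s * c b) => i.
by rewrite -hc scaler_sumr; apply: eq_bigr => b _; rewrite scalerA.
Qed.
Arguments InSpanZ s {Q}.


Lemma InSpanB Q Q' : InSpan Q -> InSpan Q' -> InSpan (fun i => Q i - Q' i).
Proof.
move=> h1 h2; apply: (InSpan_ext (InSpanD h1 (InSpanZ (-1) h2))) => i.
by rewrite scaleN1r.
Qed.
Arguments InSpanB {Q Q'}.


Lemma InSpan_sum (T : eqType) (r : seq T) (F : T -> 'I_4 -> {poly R}) :
  (forall m, m \in r -> InSpan (F m)) -> InSpan (fun i => \sum_(m <- r) F m i).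
Proof.
elim: r => [|m r ih] h.
  by apply: (InSpan_ext InSpan0) => i; rewrite big_nil.
have ih' : InSpan (fun i => \sum_(m0 <- r) F m0 i).
  by apply: ih => m' hm'; apply: h; rewrite in_cons hm' orbT.
by apply: (InSpan_ext (InSpanD (h m (mem_head _ _)) ih')) => i; rewrite big_cons.
Qed.

Lemma InSpan_basis x : InSpan (BW x).
Proof.
exists (fun b => (b == x)%:R) => i.
rewrite (bigD1 x) //= eqxx scale1r big1 ?addr0 // => b /negbTE ->.
by rewrite scale0r.
Qed.

Lemma spanA (p : nat) : (1 <= p <= k.+1)%N -> InSpan (Dat p 0).
Proof.
case: p => // p /= hp.
exact: (InSpan_basis (inl (inl (Ordinal (hp : (p < k.+1)%N))))).
Qed.

Lemma spanB (q : nat) : (1 <= q <= k.+1)%N -> InSpan (Dat 0 q).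
Proof.
case: q => // q /= hq.
exact: (InSpan_basis (inl (inr (Ordinal (hq : (q < k.+1)%N))))).
Qed.

Lemma spanC (p : nat) : (1 <= p <= k)%N -> InSpan (Dat p 1).
Proof.
case: p => [|[|p]] // hp.
  exact: (InSpan_basis (inr (inr ord0))).
have hp' : (p < k.-1)%N by move: hp hk; clear; lia.
exact: (InSpan_basis (inr (inl (inl (Ordinal hp'))))).
Qed.

Lemma spanD (q : nat) : (1 <= q <= k)%N -> InSpan (Dat 1 q).
Proof.
case: q => [|[|q]] // hq.
  exact: (InSpan_basis (inr (inr ord0))).
have hq' : (q < k.-1)%N by move: hq hk; clear; lia.
exact: (InSpan_basis (inr (inl (inr (Ordinal hq'))))).
Qed.

Lemma LP_split (p q : nat) i : (0 < p)%N -> (0 < q)%N ->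
  LP p q i = LP p 1 i + LP 1 q i - LP 1 1 i.
Proof.
case: p => // p; case: q => // q _ _.
rewrite /LP; case: i => -[|[|[|[|//]]]] hi /=; rewrite ?scale0r ?subr0 ?addr0 //.
- by rewrite addrC addKr.
- by rewrite addrK.
Qed.

Lemma span_all (p q : nat) : (p + q <= k.+1)%N -> InSpan (Dat p q).
Proof.
move=> hpq.
case: p hpq => [|p] hpq; case: q hpq => [|q] hpq.
- apply: (InSpan_ext InSpan0) => i.
  by rewrite /Dat /LP; case: i => -[|[|[|[|//]]]] hi /=; rewrite ?expr0 ?scale1r derivC.
- by apply: spanB; rewrite /=; lia.
- by apply: spanA; rewrite addn0 in hpq; rewrite /=; lia.
- have h1 : (1 <= p.+1 <= k)%N by lia.
  have h2 : (1 <= q.+1 <= k)%N by lia.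
  have h3 : (1 <= 1 <= k)%N by lia.
  apply: (InSpan_ext (InSpanB (InSpanD (spanC _ h1) (spanD _ h2)) (spanC _ h3))).
  by move=> i; rewrite /Dat (LP_split p.+1 q.+1 i) // derivB derivD.
Qed.


Lemma sumIW (F : IW -> R) : \sum_b F b =
  \sum_(j < k.+1) F (inl (inl j)) + \sum_(j < k.+1) F (inl (inr j)) +
  (\sum_(j < k.-1) F (inr (inl (inl j))) + \sum_(j < k.-1) F (inr (inl (inr j))) +
   F (inr (inr ord0))).
Proof. by rewrite !big_sumType big_ord1. Qed.

Lemma sum_delta n (F : 'I_n -> R) (j : 'I_n) :
  \sum_(j' < n) F j' * (j == j' :> nat)%:R = F j.
Proof.
rewrite (bigD1 j) //= eqxx mulr1 big1 ?addr0 // => j' hj'.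
suff -> : (j == j' :> nat) = false by rewrite mulr0.
by apply/negbTE; move: hj'; apply: contra => /eqP e; apply/eqP/val_inj; rewrite /= e.
Qed.

Lemma sum_mul0 n (F : 'I_n -> R) : \sum_(j' < n) F j' * 0 = 0.
Proof. by apply: big1 => j _; rewrite mulr0. Qed.

Lemma sum_zero n (F : 'I_n -> R) (G : 'I_n -> R) : (forall j, G j = 0) ->
  \sum_(j' < n) F j' * G j' = 0.
Proof. by move=> h; apply: big1 => j _; rewrite h mulr0. Qed.

Lemma sum_zeroF n (F : 'I_n -> R) (G : 'I_n -> R) : (forall j, F j = 0) ->
  \sum_(j' < n) F j' * G j' = 0.
Proof. by move=> h; apply: big1 => j _; rewrite h mul0r. Qed.

Lemma coefLP0 (p q n : nat) : (LP p q (@Ordinal 4 0 isT))`_n = ((q == 0%N) && (n == p))%:R.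
Proof. by rewrite /LP /= coefZ coefXn -natrM mulnb. Qed.
Lemma coefLP1 (p q n : nat) : (LP p q (@Ordinal 4 1 isT))`_n = (n == q)%:R.
Proof. by rewrite /LP /= coefXn. Qed.
Lemma coefLP2 (p q n : nat) : (LP p q (@Ordinal 4 2 isT))`_n = (n == p)%:R.
Proof. by rewrite /LP /= coefXn. Qed.
Lemma coefLP3 (p q n : nat) : (LP p q (@Ordinal 4 3 isT))`_n = ((p == 0%N) && (n == q))%:R.
Proof. by rewrite /LP /= coefZ coefXn -natrM mulnb. Qed.

Definition LPc (p q n : nat) (i : nat) : R :=
  match i with
  | 0 => ((q == 0%N) && (n == p))%:R
  | 1 => (n == q)%:R
  | 2 => (n == p)%:R
  | _ => ((p == 0%N) && (n == q))%:R
  end.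

Lemma coefLP (p q n : nat) (i : 'I_4) : (LP p q i)`_n = LPc p q n i.
Proof.
rewrite /LP /LPc; case: i => -[|[|[|[|//]]]] hi /=; rewrite ?coefZ coefXn // -natrM mulnb //.
Qed.

Lemma indepW (c : IW -> R) : (forall i, \sum_b c b *: BW b i = 0) -> forall b, c b = 0.
Proof.
move=> hc.
have hcoef i l : \sum_b c b * (LP (mon b).1 (mon b).2 i)`_l.+1 = 0.
  have := congr1 (fun Q : {poly R} => Q`_l) (hc i); rewrite /= coef_sum coef0 => h.
  have : (\sum_b c b * (LP (mon b).1 (mon b).2 i)`_l.+1) *+ l.+1 = \sum_b (c b *: BW b i)`_l.
    rewrite -mulr_natr mulr_suml; apply: eq_bigr => b _.
    by rewrite coefZ /BW /Dat coef_deriv -mulrA mulr_natr.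
  by rewrite h => /eqP; rewrite mulrn_eq0 /= => /eqP.
have hc' (i : 'I_4) l : \sum_b c b * LPc (mon b).1 (mon b).2 l.+1 i = 0.
  by rewrite -[RHS](hcoef i l); apply: eq_bigr => b _; rewrite coefLP.
have hA : forall j, c (inl (inl j)) = 0.
  move=> j; have := hc' (@Ordinal 4 0 isT) j; rewrite sumIW /=.
  by rewrite !sum_mul0 mulr0 !addr0 (@sum_delta _ (fun j0 => c (inl (inl j0))) j).
have hB : forall j, c (inl (inr j)) = 0.
  move=> j; have := hc' (@Ordinal 4 3 isT) j; rewrite sumIW /=.
  by rewrite !sum_mul0 mulr0 !addr0 add0r (@sum_delta _ (fun j0 => c (inl (inr j0))) j).
have hC : forall j, c (inr (inl (inl j))) = 0.
  move=> j; have := hc' (@Ordinal 4 2 isT) j.+1; rewrite sumIW /=.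
  rewrite (@sum_zeroF _ (fun j0 => c (inl (inl j0))) _ hA).
  by rewrite !sum_mul0 mulr0 !addr0 !add0r (@sum_delta _ (fun j0 => c (inr (inl (inl j0)))) j).
have hD : forall j, c (inr (inl (inr j))) = 0.
  move=> j; have := hc' (@Ordinal 4 1 isT) j.+1; rewrite sumIW /=.
  rewrite (@sum_zeroF _ (fun j0 => c (inl (inr j0))) _ hB).
  by rewrite !sum_mul0 mulr0 !addr0 !add0r (@sum_delta _ (fun j0 => c (inr (inl (inr j0)))) j).
have hE : c (inr (inr ord0)) = 0.
  have := hc' (@Ordinal 4 1 isT) 0; rewrite sumIW /=.
  rewrite (@sum_zeroF _ (fun j0 => c (inl (inr j0))) _ hB).
  rewrite (@sum_zeroF _ (fun j0 => c (inr (inl (inl j0)))) _ hC).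
  by rewrite !sum_mul0 !add0r mulr1.
by case=> [[j|j]|[[j|j]|j]] //; rewrite (ord1 j).
Qed.


Lemma LP_ev (p q : nat) i t : (LP p q i).[t] = sS i t ^+ p * sU i t ^+ q.
Proof. by rewrite -lpoly_mon lpoly_ev -sigW_lin /phimon ev_mul !ev_exp /sigW ev_S ev_U. Qed.

Lemma card_IW : #|{: IW}| = (4 * k + 1)%N.
Proof. rewrite /IW !card_sum !card_ord -subn1; move: hk; clear; lia. Qed.

Lemma Wdim : has_dim (bdom a e1 e2) (Wtrace k a e1 e2) (4 * k + 1).
Proof.
rewrite -card_IW.
pose phib (b : IW) := phimon (mon b).1 (mon b).2.
pose f (b : IW) : 'I_4 * pt R -> pt R := fun ix =>
  ntan (normal e1 e2 ix.1) (ev (dx (phib b)) ix.2, ev (dy (phib b)) ix.2).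
apply: (@GEN a e1 e2 _ sigW VW _ f BW sigW1 sigW2 VW_nz).
- move=> b; exists (dx (phib b)), (dy (phib b)).
  have hb : dle k.+1 (phib b).
    apply: dle_mono (dle_phimon _ _).
    case: b => [[j|j]|[[j|j]|j]] /=; have := ltn_ord j; rewrite -?subn1; move: hk; clear; lia.
  split; first exact: dle_deriv.
  split; first exact: dle_deriv.
  split; last by [].
  by rewrite /curl_v /dx /dy mderiv_comm addNr.
- by move=> b i t _; rewrite /f /= TR /BW /Dat lpoly_mon.
- move=> g [w1 [w2 [h1 [h2 [hc hg]]]]].
  have hc' : dx w2 = dy w1.
    by move/eqP: hc; rewrite /curl_v addrC subr_eq0 => /eqP.
  have [phi [hphi [ex ey]]] := poincare _ _ _ h1 h2 hc'.
  pose psi := compA a e1 e2 phi.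
  have hpsi : dle k.+1 psi by apply: dle_comp.
  have evpsi s u : ev psi (s, u) = ev phi (Apt s u).
    by rewrite /psi ev_comp /Apt /=; congr ev; apply: pairE => /=; ring.
  have key i : lpoly (baseW i) (DW i) phi =
      \sum_(m <- msupp psi) psi@_m *: LP (m i0) (m i1) i.
    apply: poly01eq => t _; rewrite lpoly_ev -sigW_lin /sigW -evpsi horner_sum.
    rewrite /ev mevalE; apply: eq_bigr => m _.
    by rewrite hornerZ LP_ev !big_ord_recl big_ord0 mulr1 /coords.
  have hsp : InSpan (fun i => (lpoly (baseW i) (DW i) phi)^`()).
    apply: (InSpan_ext (InSpan_sum _ (msupp psi)
               (fun m i => psi@_m *: Dat (m i0) (m i1) i) _)).
      move=> m hm; apply: InSpanZ; apply: span_all.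
      have := leq_trans (msize_mdeg_lt hm) hpsi; rewrite mdeg2.
      by rewrite ltnS.
    move=> i; rewrite key.
    elim/big_rec2: _ => [|m y1 y2 _ ->]; first by rewrite deriv0.
    by rewrite derivD derivZ.
  have [c hcs] := hsp; exists c => i t ht.
  rewrite hg; last exact: sigW2.
  by rewrite -ex -ey TR hcs.
- exact: indepW.
Qed.

End WBasis.

End Spaces.

End Proof.

Theorem lemma5p5 (R : rcfType) (a e1 e2 : pt R) (k : nat) :
  det2 e1 e2 != 0 -> (1 <= k)%N ->
  exists dM dV dW : nat,
    has_dim (bdom a e1 e2) (Mspace k a e1 e2) dM /\
    has_dim (bdom a e1 e2) (Vtrace k a e1 e2) dV /\
    has_dim (bdom a e1 e2) (Wtrace k a e1 e2) dW /\
    (dM%:Z - dV%:Z - dW%:Z = 2)%R.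
Proof.
move=> hdet hk.
exists (4 * k.+1)%N, 1%N, (4 * k + 1)%N.
split; first exact: Mdim.
split; first exact: Vdim.
split; first exact: Wdim.
lia.
Qed.
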